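(* Let $0\le\alpha\le\beta$ be fixed. Let $(q_n)_{n\ge1}$ and $(p_n)_{n\ge1}$ be sequences with $q_n\in(0,1)$ and $p_n\in(q_n,1]$ for all $n$, such that $\lim_{n\to\infty}p_n=1$, $\lim_{n\to\infty}q_n=1$, $\lim_{n\to\infty}p_n^n=1$ and $\lim_{n\to\infty}q_n^n=1$. Then for every $f\in C[0,1]$, $S_{n,p_n,q_n}(f;x)$ converges to $f(x)$ uniformly on $[0,1]$ as $n\to\infty$, i.e. $\lim_{n\to\infty}\sup_{x\in[0,1]}|S_{n,p_n,q_n}(f;x)-f(x)|=0$.
   Context: For $p>0$, $q>0$ and integers $m\ge 0$, the $(p,q)$-integer is $[m]_{p,q}=p^{m-1}+p^{m-2}q+\cdots+pq^{m-2}+q^{m-1}$ (so $[m]_{p,q}=\frac{p^m-q^m}{p-q}$ when $p\ne q$, and $[0]_{p,q}=0$). The $(p,q)$-factorial is $[m]_{p,q}!=[1]_{p,q}[2]_{p,q}\cdots[m]_{p,q}$ with $[0]_{p,q}!=1$, and the $(p,q)$-binomial coefficient is $\left[\begin{smallmatrix} n\\ k\end{smallmatrix}\right]_{p,q}=\frac{[n]_{p,q}!}{[k]_{p,q}!\,[n-k]_{p,q}!}$ for $0\le k\le n$. For $f\in C[0,1]$, real parameters $0\le\alpha\le\beta$, and $x\in[0,1]$, the $(p,q)$-Bernstein–Stancu operator is $$S_{n,p,q}(f;x)=\frac{1}{p^{n(n-1)/2}}\sum_{k=0}^{n}\left[\begin{smallmatrix} n\\ k\end{smallmatrix}\right]_{p,q}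 p^{k(k-1)/2}\,x^{k}\prod_{s=0}^{n-k-1}(p^{s}-q^{s}x)\; f\!\left(\frac{p^{n-k}[k]_{p,q}+\alpha}{[n]_{p,q}+\beta}\right),$$ where an empty product (when $k=n$) equals $1$. *)

(* Defs.v *)
From Stdlib Require Import Reals Lra Lia.
Open Scope R_scope.

(* (p,q)-integer [m]_{p,q} = sum_{j=0}^{m-1} p^(m-1-j) q^j ; [0] = 0 *)
Fixpoint pq_int_aux (p q : R) (m j : nat) : R :=
  match j with
  | O => 0
  | S j' => pq_int_aux p q m j' + p ^ (m - 1 - j') * q ^ j'
  end.
Definition pq_int (p q : R) (m : nat) : R := pq_int_aux p q m m.

Fixpoint pq_fact (p q : R) (m : nat) : R :=
  match m with
  | O => 1
  | S m' => pq_fact p q m' * pq_int p q (S m')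
  end.

Definition pq_binom (p q : R) (n k : nat) : R :=
  pq_fact p q n / (pq_fact p q k * pq_fact p q (n - k)).

Fixpoint pq_prod (p q x : R) (m : nat) : R :=
  match m with
  | O => 1
  | S m' => pq_prod p q x m' * (p ^ m' - q ^ m' * x)
  end.


Definition pq_stancu (alpha beta p q : R) (n : nat) (f : R -> R) (x : R) : R :=
  / p ^ (n * (n - 1) / 2) *
  sum_f_R0 (fun k =>
     pq_binom p q n k * p ^ (k * (k - 1) / 2) * x ^ k * pq_prod p q x (n - k)
     * f ((p ^ (n - k) * pq_int p q k + alpha) / (pq_int p q n + beta))) n.

Definition continuous_on_01 (f : R -> R) : Prop :=
  forall x, 0 <= x <= 1 -> limit1_in f (fun y => 0 <= y <= 1) (f x) x.

(* Main.v *)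
Require Import Defs.
From Stdlib Require Import Reals Lra Lia Psatz.
Open Scope R_scope.


Lemma half_succ (j : nat) : (S j * (S j - 1) / 2 = j * (j - 1) / 2 + j)%nat.
Proof.
  replace (S j * (S j - 1))%nat with (j * (j - 1) + j * 2)%nat by (destruct j; simpl; nia).
  rewrite Nat.div_add; lia.
Qed.

Lemma int_aux_closed (p q : R) (m j : nat) : (j <= m)%nat ->
  pq_int_aux p q m j * (p - q) = p ^ m - p ^ (m - j) * q ^ j.
Proof.
  induction j as [|j IH]; intros Hj.
  - simpl. rewrite Nat.sub_0_r. ring.
  - simpl pq_int_aux. rewrite Rmult_plus_distr_r, IH by lia.
    replace (m - j)%nat with (S (m - 1 - j)) by lia.
    replace (m - S j)%nat with (m - 1 - j)%nat by lia.
    simpl. ring.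
Qed.

Lemma int_closed (p q : R) (m : nat) : pq_int p q m * (p - q) = p ^ m - q ^ m.
Proof. unfold pq_int. rewrite int_aux_closed by lia. rewrite Nat.sub_diag. simpl. ring. Qed.

Lemma int_split (p q : R) (k a : nat) : p <> q ->
  pq_int p q (k + a) = p ^ k * pq_int p q a + q ^ a * pq_int p q k.
Proof.
  intros Hpq. apply (Rmult_eq_reg_r (p - q)); [| lra].
  rewrite Rmult_plus_distr_r, !Rmult_assoc, !int_closed, !pow_add. ring.
Qed.

Lemma int0 p q : pq_int p q 0 = 0.
Proof. reflexivity. Qed.

Lemma int1 p q : pq_int p q 1 = 1.
Proof. unfold pq_int; simpl; ring. Qed.

Lemma int_S (p q : R) (m : nat) : p <> q -> pq_int p q (S m) = p ^ m + q * pq_int p q m.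
Proof.
  intros H. replace (S m) with (m + 1)%nat by lia. rewrite int_split by auto.
  rewrite int1. simpl. ring.
Qed.

Lemma int_pos (p q : R) (m : nat) : 0 < q < p -> 0 < pq_int p q (S m).
Proof.
  intros H. pose proof (int_closed p q (S m)) as E.
  assert (q ^ S m < p ^ S m).
  { simpl. assert (q ^ m <= p ^ m) by (apply pow_incr; lra).
    assert (0 < p ^ m) by (apply pow_lt; lra). assert (0 <= q ^ m) by (apply pow_le; lra). nra. }
  nra.
Qed.

Lemma fact_pos (p q : R) (m : nat) : 0 < q < p -> 0 < pq_fact p q m.
Proof.
  intros H. induction m; simpl. lra. apply Rmult_lt_0_compat; auto. apply int_pos; auto.
Qed.

Lemma binom_B1 (p q : R) (m k : nat) : 0 < q < p -> (k <= m)%nat ->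
  pq_binom p q (S m) k = pq_binom p q m k * pq_int p q (S m) / pq_int p q (S (m - k)).
Proof.
  intros H Hk. unfold pq_binom.
  replace (S m - k)%nat with (S (m - k)) by lia.
  change (pq_fact p q (S m)) with (pq_fact p q m * pq_int p q (S m)).
  change (pq_fact p q (S (m-k))) with (pq_fact p q (m-k) * pq_int p q (S (m-k))).
  pose proof (fact_pos p q m H). pose proof (fact_pos p q k H). pose proof (fact_pos p q (m-k) H).
  pose proof (int_pos p q (m-k) H). pose proof (int_pos p q m H).
  field; repeat split; lra.
Qed.

Lemma binom_B2 (p q : R) (m k : nat) : 0 < q < p ->
  pq_binom p q (S m) (S k) = pq_int p q (S m) * pq_binom p q m k / pq_int p q (S k).
Proof.
  intros H. unfold pq_binom. simpl (S m - S k)%nat.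
  change (pq_fact p q (S m)) with (pq_fact p q m * pq_int p q (S m)).
  change (pq_fact p q (S k)) with (pq_fact p q k * pq_int p q (S k)).
  pose proof (fact_pos p q m H). pose proof (fact_pos p q k H). pose proof (fact_pos p q (m-k) H).
  pose proof (int_pos p q k H). pose proof (int_pos p q m H).
  field; repeat split; lra.
Qed.


Definition T (p q x : R) (n k : nat) : R :=
  pq_binom p q n k * p ^ (k * (k - 1) / 2) * x ^ k * pq_prod p q x (n - k).

Lemma c_S (p x : R) (k : nat) :
  p ^ (S k * (S k - 1) / 2) * x ^ S k = p ^ (k * (k - 1) / 2) * x ^ k * (p ^ k * x).
Proof. rewrite half_succ, pow_add. simpl. ring. Qed.

Lemma powS (x : R) (k : nat) : x ^ S k = x * x ^ k.
Proof. reflexivity. Qed.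

Lemma pow_split (p : R) (k m : nat) : (k <= m)%nat -> p ^ k * p ^ (m - k) = p ^ m.
Proof. intros. rewrite <- pow_add. f_equal. lia. Qed.

Lemma T_step (p q x : R) (m k : nat) : 0 < q < p -> (k <= m)%nat ->
  p ^ k * pq_int p q (S m - k) / pq_int p q (S m) * T p q x (S m) k
  + q ^ (S m - S k) * pq_int p q (S k) / pq_int p q (S m) * T p q x (S m) (S k)
  = T p q x m k * p ^ m.
Proof.
  intros H Hk. unfold T.
  rewrite binom_B1, binom_B2 by auto.
  replace (S m - k)%nat with (S (m - k)) by lia. simpl (S m - S k)%nat.
  rewrite half_succ, pow_add, (powS x k). simpl pq_prod.
  rewrite <- (pow_split p k m Hk).
  pose proof (int_pos p q (m-k) H). pose proof (int_pos p q m H). pose proof (int_pos p q k H).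
  field. repeat split; lra.
Qed.

Lemma T_split (p q x : R) (m k : nat) : 0 < q < p -> (k <= S m)%nat ->
  T p q x (S m) k = p ^ k * pq_int p q (S m - k) / pq_int p q (S m) * T p q x (S m) k
  + q ^ (S m - k) * pq_int p q k / pq_int p q (S m) * T p q x (S m) k.
Proof.
  intros H Hk. pose proof (int_pos p q m H).
  assert (E : pq_int p q (S m) = p ^ k * pq_int p q (S m - k) + q ^ (S m - k) * pq_int p q k).
  { replace (S m) with (k + (S m - k))%nat at 1 by lia. apply int_split. lra. }
  set (a := p ^ k * pq_int p q (S m - k)) in *. set (b := q ^ (S m - k) * pq_int p q k) in *.
  set (I := pq_int p q (S m)) in *.
  replace (a / I * T p q x (S m) k + b / I * T p q x (S m) k) with ((a + b) / I * T p q x (S m) k)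
    by (field; lra).
  rewrite <- E. field. lra.
Qed.

Lemma I0 (p q x : R) : 0 < q < p -> forall n,
  sum_f_R0 (T p q x n) n = p ^ (n * (n - 1) / 2).
Proof.
  intros H n. induction n as [|m IH].
  - simpl. unfold T, pq_binom. simpl. field.
  - set (U := fun k => p ^ k * pq_int p q (S m - k) / pq_int p q (S m) * T p q x (S m) k).
    set (V := fun k => q ^ (S m - k) * pq_int p q k / pq_int p q (S m) * T p q x (S m) k).
    rewrite (sum_eq _ (fun k => U k + V k)) by (intros; apply T_split; auto).
    rewrite plus_sum. simpl (sum_f_R0 U (S m)).
    rewrite (decomp_sum V (S m)) by lia. simpl Init.Nat.pred.
    assert (U (S m) = 0) as ->. { unfold U. rewrite Nat.sub_diag, int0. field.
      pose proof (int_pos p q m H); lra. }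
    assert (V 0%nat = 0) as ->. { unfold V. rewrite int0. field.
      pose proof (int_pos p q m H); lra. }
    rewrite Rplus_0_r, Rplus_0_l, <- plus_sum.
    rewrite (sum_eq _ (fun k => T p q x m k * p ^ m)) by (intros; unfold U, V; apply T_step; auto).
    rewrite <- scal_sum, IH, half_succ, pow_add. ring.
Qed.

Lemma Reidx (p q x : R) (m : nat) (g : nat -> R) : 0 < q < p ->
  sum_f_R0 (fun k => T p q x (S m) k * (p ^ (S m - k) * pq_int p q k) * g k) (S m)
  = pq_int p q (S m) * x * p ^ m * sum_f_R0 (fun j => T p q x m j * g (S j)) m.
Proof.
  intros H. rewrite decomp_sum by lia. simpl Init.Nat.pred. rewrite int0, !Rmult_0_r, !Rmult_0_l, Rplus_0_l.
  rewrite scal_sum. apply sum_eq. intros j Hj. unfold T.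
  rewrite binom_B2 by auto. simpl (S m - S j)%nat. rewrite half_succ, pow_add, (powS x j).
  rewrite <- (pow_split p j m Hj).
  pose proof (int_pos p q m H). pose proof (int_pos p q j H).
  field. lra.
Qed.

Lemma mom1 (p q x : R) : 0 < q < p -> forall n,
  sum_f_R0 (fun k => T p q x n k * (p ^ (n - k) * pq_int p q k)) n
  = pq_int p q n * x * p ^ (n * (n - 1) / 2).
Proof.
  intros H [|m].
  - simpl. rewrite int0. ring.
  - rewrite (sum_eq _ (fun k => T p q x (S m) k * (p ^ (S m - k) * pq_int p q k) * 1))
      by (intros; ring).
    rewrite Reidx by auto.
    rewrite (sum_eq _ (T p q x m)) by (intros; ring).
    rewrite I0, half_succ, pow_add by auto. ring.
Qed.

Lemma mom2 (p q x : R) (m : nat) : 0 < q < p ->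
  sum_f_R0 (fun k => T p q x (S m) k * (p ^ (S m - k) * pq_int p q k) ^ 2) (S m)
  = p ^ (S m * (S m - 1) / 2) * pq_int p q (S m) * (p ^ m * x + q * pq_int p q m * x ^ 2).
Proof.
  intros H.
  rewrite (sum_eq _ (fun k => T p q x (S m) k * (p ^ (S m - k) * pq_int p q k) * (p ^ (S m - k) * pq_int p q k)))
      by (intros; ring).
  rewrite Reidx by auto. simpl (S m - S _)%nat.
  rewrite (sum_eq _ (fun j => T p q x m j * p ^ m + (T p q x m j * (p ^ (m - j) * pq_int p q j)) * q)).
  2:{ intros j Hj. rewrite int_S by lra. rewrite <- (pow_split p j m Hj) at 1. ring. }
  rewrite plus_sum, <- scal_sum, <- scal_sum, I0, mom1 by auto.
  replace (S m * (m - 0) / 2)%nat with (m * (m - 1) / 2 + m)%nat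
    by (rewrite <- half_succ; f_equal).
  rewrite pow_add. ring.
Qed.


Lemma sum_lin3 (F G H : nat -> R) (a b c : R) (N : nat) :
  sum_f_R0 (fun k => a * F k + b * G k + c * H k) N
  = a * sum_f_R0 F N + b * sum_f_R0 G N + c * sum_f_R0 H N.
Proof. induction N; simpl. ring. rewrite IHN. ring. Qed.

Lemma int_nonneg p q m : 0 < q < p -> 0 <= pq_int p q m.
Proof. intros H. destruct m. rewrite int0; lra. left; apply int_pos; auto. Qed.

Lemma prod_nonneg p q x m : 0 < q < p -> 0 <= x <= 1 -> 0 <= pq_prod p q x m.
Proof.
  intros H Hx. induction m; simpl. lra. apply Rmult_le_pos; auto.
  assert (q ^ m <= p ^ m) by (apply pow_incr; lra). assert (0 <= q ^ m) by (apply pow_le; lra).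
  nra.
Qed.

Lemma T_nonneg p q x n k : 0 < q < p -> 0 <= x <= 1 -> 0 <= T p q x n k.
Proof.
  intros H Hx. unfold T. apply Rmult_le_pos; [apply Rmult_le_pos; [apply Rmult_le_pos|]|].
  - unfold pq_binom. left. apply Rdiv_lt_0_compat. apply fact_pos; auto.
    apply Rmult_lt_0_compat; apply fact_pos; auto.
  - apply pow_le; lra.
  - apply pow_le; lra.
  - apply prod_nonneg; auto.
Qed.

Lemma Var (p q x : R) (m : nat) : 0 < q < p ->
  sum_f_R0 (fun k => T p q x (S m) k * (p ^ (S m - k) * pq_int p q k / pq_int p q (S m) - x) ^ 2) (S m)
  = p ^ (S m * (S m - 1) / 2) * (p ^ m * x * (1 - x)) / pq_int p q (S m).
Proof.
  intros H. pose proof (int_pos p q m H) as HI.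
  rewrite (sum_eq _ (fun k => (/ pq_int p q (S m) ^ 2) * (T p q x (S m) k * (p ^ (S m - k) * pq_int p q k) ^ 2)
     + (- 2 * x / pq_int p q (S m)) * (T p q x (S m) k * (p ^ (S m - k) * pq_int p q k))
     + x ^ 2 * T p q x (S m) k)).
  2:{ intros. field. lra. }
  rewrite sum_lin3. rewrite mom2 by auto. rewrite (mom1 p q x H). rewrite I0 by auto.
  rewrite (int_S p q m) by lra. field.
  rewrite <- (int_S p q m) by lra. lra.
Qed.

Lemma int_lower p q m : 0 < q < p -> q <= 1 -> INR m * q ^ m <= pq_int p q m.
Proof.
  intros H Hq. induction m.
  - rewrite int0. simpl. lra.
  - rewrite int_S by lra. rewrite S_INR. simpl pow.
    assert (q ^ m <= p ^ m) by (apply pow_incr; lra). assert (0 <= q ^ m) by (apply pow_le; lra).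
    assert (0 <= INR m) by apply pos_INR.
    nra.
Qed.

Lemma node_le p q n k : 0 < q < p -> (k <= n)%nat ->
  p ^ (n - k) * pq_int p q k <= pq_int p q n.
Proof.
  intros H Hk.
  assert (E : pq_int p q n = p ^ (n - k) * pq_int p q k + q ^ k * pq_int p q (n - k)).
  { rewrite <- int_split by lra. f_equal. lia. }
  rewrite E.
  assert (0 <= q ^ (n - k) ) by (apply pow_le; lra).
  pose proof (int_nonneg p q (n - k) H). assert (0 <= q ^ k) by (apply pow_le; lra). nra.
Qed.

Lemma sq_bound (P I alpha beta x : R) : 0 < I -> 0 <= alpha <= beta -> 0 <= x <= 1 ->
  ((P + alpha) / (I + beta) - x) ^ 2 <= 2 * (P / I - x) ^ 2 + 2 * (beta / I) ^ 2.
Proof.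
  intros HI Hab Hx.
  set (u := P / I - x). set (s := I + beta). set (w := alpha - beta * x).
  assert (Hs : 0 < s) by (unfold s; lra).
  assert (E : (P + alpha) / s - x = (I / s) * u + w / s) by (unfold u, s, w; field; lra).
  rewrite E.
  assert (Hr : 0 < I / s <= 1). { split. apply Rdiv_lt_0_compat; lra.
    apply (Rmult_le_reg_r s); auto. unfold Rdiv; rewrite Rmult_assoc, Rinv_l by lra. unfold s; lra. }
  assert (Hv : (w / s) ^ 2 <= (beta / I) ^ 2).
  { assert (Hw0 : - beta <= w <= beta) by (unfold w; split; nra).
    assert (Hw : w ^ 2 <= beta ^ 2) by nra.
    replace ((w / s) ^ 2) with (w ^ 2 / s ^ 2) by (field; lra).
    replace ((beta / I) ^ 2) with (beta ^ 2 / I ^ 2) by (field; lra).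
    apply Rle_trans with (beta ^ 2 / s ^ 2).
    - apply Rmult_le_compat_r; auto. left; apply Rinv_0_lt_compat; nra.
    - apply Rmult_le_compat_l. nra. apply Rinv_le_contravar. nra. unfold s; nra. }
  set (r := I / s) in *. set (v := w / s) in *. set (bI := beta / I) in *.
  clearbody r v bI u.
  assert (r ^ 2 <= 1) by nra.
  assert (r ^ 2 * u ^ 2 <= u ^ 2).
  { rewrite <- (Rmult_1_l (u ^ 2)) at 2. apply Rmult_le_compat_r; auto. apply pow2_ge_0. }
  assert ((r * u + v) ^ 2 <= 2 * (r ^ 2 * u ^ 2) + 2 * v ^ 2).
  { assert (0 <= (r * u - v) ^ 2) by apply pow2_ge_0.
    replace (2 * (r ^ 2 * u ^ 2) + 2 * v ^ 2) with ((r * u + v) ^ 2 + (r * u - v) ^ 2) by ring. lra. }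
  lra.
Qed.


Lemma core (alpha beta p q : R) (m : nat) (f : R -> R) (x E K : R) :
  0 <= alpha <= beta -> 0 < q < p -> p <= 1 -> 0 <= x <= 1 -> 0 <= K ->
  (forall y z, 0 <= y <= 1 -> 0 <= z <= 1 -> Rabs (f y - f z) <= E + K * (y - z) ^ 2) ->
  Rabs (pq_stancu alpha beta p q (S m) f x - f x)
  <= E + K * (2 / pq_int p q (S m) + 2 * (beta / pq_int p q (S m)) ^ 2).
Proof.
  intros Hab Hpq Hp1 Hx HK Hf.
  pose proof (int_pos p q m Hpq) as HI.
  set (I := pq_int p q (S m)) in *.
  set (pi := p ^ (S m * (S m - 1) / 2)).
  assert (Hpi : 0 < pi) by (apply pow_lt; lra).
  set (nd := fun k => (p ^ (S m - k) * pq_int p q k + alpha) / (I + beta)).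
  set (P := fun k => p ^ (S m - k) * pq_int p q k).
  assert (Hnd : forall k, (k <= S m)%nat -> 0 <= nd k <= 1).
  { intros k Hk. pose proof (node_le p q (S m) k Hpq Hk). fold I in H.
    assert (0 <= p ^ (S m - k) * pq_int p q k).
    { apply Rmult_le_pos. apply pow_le; lra. apply int_nonneg; auto. }
    unfold nd. split.
    - apply Rmult_le_pos. lra. left; apply Rinv_0_lt_compat; lra.
    - apply (Rmult_le_reg_r (I + beta)). lra. unfold Rdiv. rewrite Rmult_assoc, Rinv_l by lra. lra. }
  assert (Hst : pq_stancu alpha beta p q (S m) f x - f x
     = / pi * sum_f_R0 (fun k => T p q x (S m) k * (f (nd k) - f x)) (S m)).
  { assert (Hs : pq_stancu alpha beta p q (S m) f x = / pi * sum_f_R0 (fun k => T p q x (S m) k * f (nd k)) (S m)) by reflexivity.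
    rewrite Hs.
    rewrite (sum_eq (fun k => T p q x (S m) k * (f (nd k) - f x))
        (fun k => 1 * (T p q x (S m) k * f (nd k)) + (- f x) * T p q x (S m) k + 0 * T p q x (S m) k))
      by (intros; ring).
    rewrite sum_lin3, I0 by auto. fold pi. field. lra. }
  rewrite Hst, Rabs_mult, Rabs_inv, (Rabs_pos_eq pi) by lra.
  eapply Rle_trans.
  { apply Rmult_le_compat_l. left; apply Rinv_0_lt_compat; auto. apply sum_f_R0_triangle. }
  eapply Rle_trans.
  { apply Rmult_le_compat_l. left; apply Rinv_0_lt_compat; auto.
    apply (sum_Rle _ (fun k => 1 * T p q x (S m) k * E
        + (2 * K) * (T p q x (S m) k * (P k / I - x) ^ 2) + (2 * K * (beta / I) ^ 2) * T p q x (S m) k)).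
    intros k Hk. pose proof (T_nonneg p q x (S m) k Hpq Hx).
    rewrite Rabs_mult, (Rabs_pos_eq (T _ _ _ _ _)) by auto.
    pose proof (sq_bound (P k) I alpha beta x HI Hab Hx) as Hsq.
    pose proof (Hf (nd k) x (Hnd k Hk) Hx) as Hfk.
    unfold nd in Hfk. fold (P k) in Hfk.
    assert (K * ((P k + alpha) / (I + beta) - x) ^ 2 <= K * (2 * (P k / I - x) ^ 2 + 2 * (beta / I) ^ 2))
      by (apply Rmult_le_compat_l; auto).
    assert (Rabs (f ((P k + alpha) / (I + beta)) - f x) <= E + K * (2 * (P k / I - x) ^ 2 + 2 * (beta / I) ^ 2)) by lra.
    unfold nd. fold (P k).
    replace (1 * T p q x (S m) k * E + 2 * K * (T p q x (S m) k * (P k / I - x) ^ 2) +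
      2 * K * (beta / I) ^ 2 * T p q x (S m) k) with
      (T p q x (S m) k * (E + K * (2 * (P k / I - x) ^ 2 + 2 * (beta / I) ^ 2))) by ring.
    apply Rmult_le_compat_l; auto. }
  rewrite (sum_eq _ (fun k => E * T p q x (S m) k
        + (2 * K) * (T p q x (S m) k * (P k / I - x) ^ 2) + (2 * K * (beta / I) ^ 2) * T p q x (S m) k))
    by (intros; ring).
  rewrite sum_lin3. unfold P. rewrite Var, I0 by auto. fold pi. fold I.
  assert (Hpm : p ^ m <= 1) by (rewrite <- (pow1 m); apply pow_incr; lra).
  assert (0 <= p ^ m) by (apply pow_le; lra).
  assert (Hxx : p ^ m * x * (1 - x) <= 1).
  { assert (0 <= x * (1 - x) <= 1) by nra. nra. }
  replace (/ pi * (E * pi + 2 * K * (pi * (p ^ m * x * (1 - x)) / I) + 2 * K * (beta / I) ^ 2 * pi))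
    with (E + K * (2 * (p ^ m * x * (1 - x)) / I) + K * (2 * (beta / I) ^ 2)) by (field; lra).
  assert (2 * (p ^ m * x * (1 - x)) / I <= 2 / I).
  { unfold Rdiv. apply Rmult_le_compat_r. left; apply Rinv_0_lt_compat; auto. lra. }
  assert (K * (2 * (p ^ m * x * (1 - x)) / I) <= K * (2 / I)) by (apply Rmult_le_compat_l; auto).
  nra.
Qed.


Definition cl (y : R) : R := Rmax 0 (Rmin 1 y).

Lemma cl_in y : 0 <= cl y <= 1.
Proof. unfold cl, Rmax, Rmin. repeat destruct Rle_dec; lra. Qed.

Lemma cl_id y : 0 <= y <= 1 -> cl y = y.
Proof. intros. unfold cl, Rmax, Rmin. repeat destruct Rle_dec; lra. Qed.

Lemma cl_lip y z : Rabs (cl y - cl z) <= Rabs (y - z).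
Proof. unfold cl, Rmax, Rmin. repeat destruct Rle_dec; unfold Rabs; repeat destruct Rcase_abs; lra. Qed.

Lemma cont_ext (h : R -> R) :
  (forall x, 0 <= x <= 1 -> limit1_in h (fun y => 0 <= y <= 1) (h x) x) ->
  forall x, continuity_pt (fun y => h (cl y)) x.
Proof.
  intros H x. unfold continuity_pt, continue_in, limit1_in, limit_in.
  intros eps Heps. destruct (H (cl x) (cl_in x) eps Heps) as [alp [Ha Hb]].
  exists alp. split; auto. intros y [_ Hd]. apply Hb. split. apply cl_in.
  simpl in *. unfold R_dist in *. eapply Rle_lt_trans; [apply cl_lip | auto].
Qed.

Lemma abs_cont (f : R -> R) : continuous_on_01 f ->
  forall x, 0 <= x <= 1 -> limit1_in (fun y => Rabs (f y)) (fun y => 0 <= y <= 1) (Rabs (f x)) x.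
Proof.
  intros H x Hx. unfold limit1_in, limit_in. intros eps Heps.
  destruct (H x Hx eps Heps) as [alp [Ha Hb]]. exists alp. split; auto.
  intros y Hy. specialize (Hb y Hy). simpl in *. unfold R_dist in *.
  eapply Rle_lt_trans; [apply Rabs_triang_inv2 | auto].
Qed.

Lemma final_bound (K beta I n : R) : 0 <= K -> 1 <= n -> n / 2 <= I ->
  K * (2 / I + 2 * (beta / I) ^ 2) <= K * (4 + 8 * beta ^ 2) / n.
Proof.
  intros HK Hn HI.
  assert (HI0 : 0 < I) by lra.
  set (u := / I). set (v := / n).
  assert (Hv : 0 < v <= 1). { unfold v. split. apply Rinv_0_lt_compat; lra.
    rewrite <- Rinv_1. apply Rinv_le_contravar; lra. }
  assert (Hu : 0 < u <= 2 * v). { unfold u, v. split. apply Rinv_0_lt_compat; lra.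
    apply (Rmult_le_reg_r (I * n)). nra. field_simplify; lra. }
  replace (2 / I + 2 * (beta / I) ^ 2) with (2 * u + 2 * beta ^ 2 * u ^ 2) by (unfold u; field; lra).
  replace (K * (4 + 8 * beta ^ 2) / n) with (K * ((4 + 8 * beta ^ 2) * v)) by (unfold v; field; lra).
  apply Rmult_le_compat_l; auto.
  assert (u ^ 2 <= 4 * v) by nra.
  assert (0 <= beta ^ 2) by apply pow2_ge_0.
  nra.
Qed.


Theorem theorem3p1p1 (alpha beta : R) (p q : nat -> R) :
  0 <= alpha -> alpha <= beta ->
  (forall n, (1 <= n)%nat -> 0 < q n < 1) ->
  (forall n, (1 <= n)%nat -> q n < p n <= 1) ->
  Un_cv p 1 -> Un_cv q 1 ->
  Un_cv (fun n => p n ^ n) 1 -> Un_cv (fun n => q n ^ n) 1 ->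
  forall f : R -> R, continuous_on_01 f ->
  forall eps : R, eps > 0 ->
  exists N : nat, forall n : nat, (N <= n)%nat ->
    forall x : R, 0 <= x <= 1 ->
      Rabs (pq_stancu alpha beta (p n) (q n) n f x - f x) < eps.
Proof.
  intros Ha Hab Hq Hp _ _ _ Hqn f Hf eps Heps.
  assert (Hg : forall x, 0 <= x <= 1 -> continuity_pt (fun y => f (cl y)) x)
    by (intros; apply cont_ext; auto).
  pose proof (Heine _ _ (compact_P3 0 1) Hg) as HU.
  destruct (HU (mkposreal (eps / 2) ltac:(lra))) as [delta Hdel].
  assert (Hg2 : forall x, 0 <= x <= 1 -> continuity_pt (fun y => Rabs (f (cl y))) x)
    by (intros; apply (cont_ext (fun y => Rabs (f y))); apply abs_cont; auto).
  destruct (continuity_ab_maj _ 0 1 ltac:(lra) Hg2) as [Mx [HM _]].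
  set (M := Rabs (f (cl Mx))) in *.
  assert (HM0 : 0 <= M) by apply Rabs_pos.
  assert (HMb : forall y, 0 <= y <= 1 -> Rabs (f y) <= M).
  { intros y Hy. rewrite <- (cl_id y Hy). apply HM; auto. }
  pose proof (cond_pos delta) as Hd0.
  set (K := 2 * M / (delta * delta)).
  assert (HK : 0 <= K). { unfold K. apply Rmult_le_pos. lra. left. apply Rinv_0_lt_compat. nra. }
  assert (Hfb : forall y z, 0 <= y <= 1 -> 0 <= z <= 1 -> Rabs (f y - f z) <= eps / 2 + K * (y - z) ^ 2).
  { intros y z Hy Hz.
    assert (0 <= K * (y - z) ^ 2) by (apply Rmult_le_pos; auto; apply pow2_ge_0).
    destruct (Rlt_le_dec (Rabs (y - z)) delta) as [Hl | Hl].
    - assert (Rabs (f (cl y) - f (cl z)) < eps / 2).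
      { apply (Hdel y z Hy Hz Hl). }
      rewrite (cl_id y Hy), (cl_id z Hz) in H0. lra.
    - assert (delta * delta <= (y - z) ^ 2).
      { rewrite <- pow2_abs. simpl. rewrite Rmult_1_r. apply Rmult_le_compat; lra. }
      assert (2 * M <= K * (y - z) ^ 2).
      { unfold K. apply (Rmult_le_reg_r (delta * delta)). nra.
        replace (2 * M / (delta * delta) * (y - z) ^ 2 * (delta * delta)) with (2 * M * (y - z) ^ 2)
          by (field; lra). nra. }
      pose proof (HMb y Hy). pose proof (HMb z Hz).
      pose proof (Rabs_triang (f y) (- f z)). rewrite Rabs_Ropp in H4. unfold Rminus. lra. }
  destruct (Hqn (1 / 2) ltac:(lra)) as [N1 HN1].
  destruct (INR_unbounded (2 * (K * (4 + 8 * beta ^ 2)) / eps)) as [N2 HN2].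
  exists (Nat.max (Nat.max N1 N2) 1). intros n Hn x Hx.
  destruct n as [|m]. lia.
  pose proof (Hq (S m) ltac:(lia)) as Hq1. pose proof (Hp (S m) ltac:(lia)) as Hp1.
  eapply Rle_lt_trans.
  { apply core; [lra|lra|lra|lra|exact HK|exact Hfb]. }
  assert (Hqq : q (S m) ^ S m > 1 / 2).
  { specialize (HN1 (S m) ltac:(lia)). unfold Rdist, R_dist in HN1.
    apply Rabs_def2 in HN1. lra. }
  pose proof (int_lower (p (S m)) (q (S m)) (S m) ltac:(lra) ltac:(lra)) as Hlow.
  assert (HnR : 1 <= INR (S m)) by (rewrite S_INR; pose proof (pos_INR m); lra).
  assert (INR (S m) / 2 <= pq_int (p (S m)) (q (S m)) (S m)) by nra.
  pose proof (final_bound K beta _ _ HK HnR H) as Hfin.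
  assert (HN2' : INR N2 <= INR (S m)) by (apply le_INR; lia).
  assert (K * (4 + 8 * beta ^ 2) / INR (S m) < eps / 2).
  { apply (Rmult_lt_reg_r (INR (S m))). lra.
    unfold Rdiv at 1. rewrite Rmult_assoc, Rinv_l by lra. rewrite Rmult_1_r.
    assert (HH : 2 * (K * (4 + 8 * beta ^ 2)) / eps < INR (S m)) by lra.
    apply (Rmult_lt_compat_r eps) in HH; auto.
    unfold Rdiv in HH. rewrite Rmult_assoc, Rinv_l in HH by lra. lra. }
  lra.
Qed.
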